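(* Let $P_0,P_1,P_2\in\mathbb H$ be distinct and set $d_0:=\sqrt{1-2\langle P_1,P_2\rangle}$, $d_1:=\sqrt{1-2\langle P_2,P_0\rangle}$, $d_2:=\sqrt{1-2\langle P_0,P_1\rangle}$ (indices in $\mathbb Z/3\mathbb Z$). Then for every $i\in\mathbb Z/3\mathbb Z$, $$d_i\ge\sqrt3\qquad\text{and}\qquad d_i^2-1\le(d_{i+1}^2-1)(d_{i+2}^2-1).$$
   Context: $\langle v,w\rangle=-v_1w_1+v_2w_2+v_3w_3$ on $\mathbb R^3$; $\mathbb H=\{P\in\mathbb R^3:\langle P,P\rangle=-1,\ P_1\ge1\}$. *)

(* Defs.v *)
From Stdlib Require Import Reals.
Open Scope R_scope.

Definition R3 : Type := (R * R * R)%type.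

Definition mink (v w : R3) : R :=
  match v, w with
  | (v1, v2, v3), (w1, w2, w3) => - v1 * w1 + v2 * w2 + v3 * w3
  end.

Definition coord1 (v : R3) : R := match v with (v1, _, _) => v1 end.

Definition inH (P : R3) : Prop := mink P P = -1 /\ 1 <= coord1 P.

Definition d (P : nat -> R3) (i : nat) : R :=
  sqrt (1 - 2 * mink (P ((i + 1) mod 3)%nat) (P ((i + 2) mod 3)%nat)).

(* Main.v *)
Require Import Defs.
From Stdlib Require Import Reals Lra Psatz Lia.
Open Scope R_scope.

Lemma ge1 (P Q : R3) : inH P -> inH Q -> 1 <= - mink P Q.
Proof.
  destruct P as [[p0 p1] p2], Q as [[q0 q1] q2]; unfold inH, mink, coord1.
  intros [HP HP1] [HQ HQ1].
  set (s := p1*q1 + p2*q2).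
  assert (E : (p0*q0)^2 - (1+s)^2 = (p1-q1)^2+(p2-q2)^2+(p1*q2-p2*q1)^2).
  { assert (Hp2 : p0^2 = 1+p1^2+p2^2) by nra.
    assert (Hq2 : q0^2 = 1+q1^2+q2^2) by nra.
    unfold s. replace ((p0*q0)^2) with (p0^2*q0^2) by ring.
    rewrite Hp2, Hq2. ring. }
  assert (p0*q0 >= 1) by nra.
  assert (1 + s <= p0*q0).
  { destruct (Rle_lt_dec (1+s) (p0*q0)) as [h|h]; [exact h|].
    exfalso.
    assert ((p0*q0)^2 < (1+s)^2).
    { replace ((p0*q0)^2) with ((p0*q0)*(p0*q0)) by ring.
      replace ((1+s)^2) with ((1+s)*(1+s)) by ring.
      apply Rmult_le_0_lt_compat; lra. }
    assert (0 <= (p1-q1)^2+(p2-q2)^2+(p1*q2-p2*q1)^2) by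
      (apply Rplus_le_le_0_compat; [apply Rplus_le_le_0_compat|]; apply pow2_ge_0).
    lra. }
  unfold s in *; nra.
Qed.

Lemma gram (P Q R : R3) : inH P -> inH Q -> inH R ->
  (- mink Q R)^2 + (- mink R P)^2 + (- mink P Q)^2
   - 2*(- mink Q R)*(- mink R P)*(- mink P Q) - 1 <= 0.
Proof.
  intros [HP _] [HQ _] [HR _].
  assert (E : exists D, mink P P * mink Q Q * mink R R + 2 * mink Q R * mink R P * mink P Q
     - mink P P * (mink Q R)^2 - mink Q Q * (mink R P)^2 - mink R R * (mink P Q)^2 = - D^2).
  { destruct P as [[p0 p1] p2], Q as [[q0 q1] q2], R as [[r0 r1] r2]; simpl.
    exists (p0*(q1*r2 - q2*r1) - p1*(q0*r2-q2*r0) + p2*(q0*r1-q1*r0)). ring. }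
  destruct E as [D E]. rewrite HP, HQ, HR in E. nra.
Qed.

Lemma key (P Q R : R3) : inH P -> inH Q -> inH R ->
  - mink Q R <= 2 * (- mink R P) * (- mink P Q).
Proof.
  intros HP HQ HR.
  pose proof (gram P Q R HP HQ HR) as G.
  pose proof (ge1 R P HR HP). pose proof (ge1 P Q HP HQ).
  set (a := - mink Q R) in *. set (b := - mink R P) in *. set (c := - mink P Q) in *.
  assert (b*c >= 1) by nra.
  nra.
Qed.

Lemma mink_sym (P Q : R3) : mink P Q = mink Q P.
Proof. destruct P as [[? ?] ?], Q as [[? ?] ?]; simpl; ring. Qed.

Lemma dsq (P Q : R3) : inH P -> inH Q ->
  sqrt 3 <= sqrt (1 - 2 * mink P Q) /\ (sqrt (1 - 2 * mink P Q))^2 - 1 = 2 * (- mink P Q).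
Proof.
  intros HP HQ. pose proof (ge1 P Q HP HQ). split.
  - apply sqrt_le_1_alt; lra.
  - rewrite <- Rsqr_pow2, Rsqr_sqrt by lra. ring.
Qed.

Theorem lemma3p2 (P : nat -> R3) :
  inH (P 0%nat) -> inH (P 1%nat) -> inH (P 2%nat) ->
  P 0%nat <> P 1%nat -> P 1%nat <> P 2%nat -> P 0%nat <> P 2%nat ->
  forall i : nat, (i < 3)%nat ->
    sqrt 3 <= d P i /\
    (d P i) ^ 2 - 1 <=
      ((d P ((i + 1) mod 3)) ^ 2 - 1) * ((d P ((i + 2) mod 3)) ^ 2 - 1).
Proof.
  intros H0 H1 H2 _ _ _ i Hi.
  assert (i = 0%nat \/ i = 1%nat \/ i = 2%nat) as [-> | [-> | ->]] by lia;
  unfold d; simpl.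
  - destruct (dsq _ _ H1 H2) as [A A']. destruct (dsq _ _ H2 H0) as [_ B].
    destruct (dsq _ _ H0 H1) as [_ C]. idtac. split; [exact A|].
    pose proof (key (P 0%nat) (P 1%nat) (P 2%nat) H0 H1 H2). nra.
  - destruct (dsq _ _ H2 H0) as [A A']. destruct (dsq _ _ H0 H1) as [_ B].
    destruct (dsq _ _ H1 H2) as [_ C]. split; [exact A|].
    pose proof (key (P 1%nat) (P 2%nat) (P 0%nat) H1 H2 H0). nra.
  - destruct (dsq _ _ H0 H1) as [A A']. destruct (dsq _ _ H1 H2) as [_ B].
    destruct (dsq _ _ H2 H0) as [_ C]. split; [exact A|].
    pose proof (key (P 2%nat) (P 0%nat) (P 1%nat) H2 H0 H1). nra.
Qed.
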